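(* Let $\Sigma$ be a finite alphabet, let $n$ be a positive integer and let $\varphi\in\mathrm{FO}^2_n[<]$ be a unique position formula. Then there are $k\in\mathbb{N}$, pairwise mutually exclusive formulas $\alpha_1,\dots,\alpha_k\in\mathrm{FO}^2_n[<]$ and rankers $r_1,\dots,r_k\in R_n^\star$ such that $$\varphi\equiv\bigvee_{i\in[1,k]}\bigl(\alpha_i\wedge\psi_{r_i}\bigr),$$ where for each ranker $r\in R_n^\star$, $\psi_r\in\mathrm{FO}^2_n[<]$ denotes a formula with free variable $x$ such that for all $w\in\Sigma^\star$ and $i\in[1,|w|]$, $(w,i)\models\psi_r$ iff $i=r(w)$.
   Context: Words are finite structures with universe $\{1,\dots,|w|\}$, unary predicates $Q_a$ ($a\in\Sigma$) marking the positions carrying letter $a$, and the order $<$. $\mathrm{FO}^2_n[<]$ is first-order logic over this signature using only the variables $x,y$, with quantifier depth at most $n$. $(w,i)$ denotes $w$ with $x$ interpreted as $i$. A formula $\varphi\in\mathrm{FO}^2[<]$ with free variable $x$ is a unique position formula if for every $w\in\Sigma^\star$ there is at most one $i\in[1,|w|]$ with $(w,i)\models\varphi$. Boundary positions: for $a\in\Sigma$, $\triangleright_a(w)=\min\{i: w_i=a\}$, $\triangleleft_a(w)=\max\{i: w_i=a\}$, $\triangleright_a(w,q)=\min\{i\in[q+1,|w|]:w_i=a\}$, $\triangleleft_a(w,q)=\max\{i\in[1,q-1]:w_i=a\}$ (undefined if empty). An $n$-ranker is a sequence $r=(p_1,\dots,p_n)$ of boundary positions with $r(w)=p_1(w)$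 if $n=1$, undefined if $(p_1,\dots,p_{n-1})(w)$ is undefined, and $p_n(w,(p_1,\dots,p_{n-1})(w))$ otherwise. $R_n^\star$ is the set of all $i$-rankers for $i\in[1,n]$. *)

(* Defs.v *)
From mathcomp Require Import all_boot.
Set Implicit Arguments. Unset Strict Implicit. Unset Printing Implicit Defensive.

Inductive var := VX | VY.

Inductive fo2 (Sigma : Type) :=
  | FTrue
  | FFalse
  | FLetter of Sigma & var
  | FLt of var & var
  | FEq of var & var
  | FNot of fo2 Sigma
  | FAnd of fo2 Sigma & fo2 Sigma
  | FOr of fo2 Sigma & fo2 Sigma
  | FEx of var & fo2 Sigma.

Arguments FTrue {Sigma}.
Arguments FFalse {Sigma}.

Definition var_eqb (u v : var) : bool :=
  match u, v with VX, VX | VY, VY => true | _, _ => false end.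

Fixpoint qdepth (Sigma : Type) (f : fo2 Sigma) : nat :=
  match f with
  | FNot g => qdepth g
  | FAnd g h | FOr g h => maxn (qdepth g) (qdepth h)
  | FEx _ g => (qdepth g).+1
  | _ => 0
  end.

Definition in_FO2n (Sigma : Type) (n : nat) (f : fo2 Sigma) : bool :=
  qdepth f <= n.

Fixpoint free (Sigma : Type) (v : var) (f : fo2 Sigma) : bool :=
  match f with
  | FTrue | FFalse => false
  | FLetter _ u => var_eqb u v
  | FLt u1 u2 | FEq u1 u2 => var_eqb u1 v || var_eqb u2 v
  | FNot g => free v g
  | FAnd g h | FOr g h => free v g || free v h
  | FEx u g => ~~ var_eqb u v && free v g
  end.

Definition only_x (Sigma : Type) (f : fo2 Sigma) : bool := ~~ free VY f.

(* ---------- Semantics over words; positions are 1..|w| ---------- *)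
Section Sem.
Variable Sigma : eqType.
Implicit Types (w : seq Sigma) (f : fo2 Sigma).

Definition letter_at w (i : nat) : option Sigma := onth w i.-1.

Definition in_pos w (i : nat) : bool := (1 <= i) && (i <= size w).

Definition upd (nu : var -> nat) (v : var) (i : nat) : var -> nat :=
  fun u => if var_eqb u v then i else nu u.

Fixpoint sat w (nu : var -> nat) f : Prop :=
  match f with
  | FTrue => True
  | FFalse => False
  | FLetter a v => in_pos w (nu v) /\ letter_at w (nu v) = Some a
  | FLt u v => nu u < nu v
  | FEq u v => nu u = nu v
  | FNot g => ~ sat w nu g
  | FAnd g h => sat w nu g /\ sat w nu h
  | FOr g h => sat w nu g \/ sat w nu h
  | FEx v g => exists i, in_pos w i /\ sat w (upd nu v i) g
  end.

(* (w, i) |= f : x interpreted as i (y is irrelevant for formulas with only x free) *)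
Definition satx w (i : nat) f : Prop := sat w (fun v => if v is VX then i else 0) f.

Definition unique_position f : Prop :=
  only_x f /\
  forall w i j, in_pos w i -> in_pos w j -> satx w i f -> satx w j f -> i = j.

Definition fo2_equiv f g : Prop :=
  forall w i, in_pos w i -> (satx w i f <-> satx w i g).

(* a boundary position: (true, a) is |>_a, (false, a) is <|_a *)
Definition bpos := (bool * Sigma)%type.

Definition positions_with w (a : Sigma) (s : seq nat) : seq nat :=
  [seq i <- s | letter_at w i == Some a].

(* |>_a(w) = min {i : w_i = a},  <|_a(w) = max {i : w_i = a} *)
Definition bpos_abs w (p : bpos) : option nat :=
  let l := positions_with w p.2 (iota 1 (size w)) in
  if p.1 then ohead l else ohead (rev l).

(* |>_a(w,q) = min {i in [q+1,|w|] : w_i = a},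
   <|_a(w,q) = max {i in [1,q-1] : w_i = a} *)
Definition bpos_rel w (p : bpos) (q : nat) : option nat :=
  if p.1 then ohead (positions_with w p.2 (iota q.+1 (size w - q)))
  else ohead (rev (positions_with w p.2 (iota 1 q.-1))).

Definition ranker := seq bpos.

(* r(w) for a ranker r = (p_1,...,p_m); undefined (None) for the empty sequence *)
Definition ranker_eval w (r : ranker) : option nat :=
  match r with
  | [::] => None
  | p1 :: rest =>
      foldl (fun (acc : option nat) p =>
               if acc is Some q then bpos_rel w p q else None)
            (bpos_abs w p1) rest
  end.

Definition in_Rstar (n : nat) (r : ranker) : bool := (1 <= size r) && (size r <= n).

Definition defines_ranker (n : nat) (psi : fo2 Sigma) (r : ranker) : Prop :=
  in_FO2n n psi /\ only_x psi /\
  forall w i, in_pos w i -> (satx w i psi <-> ranker_eval w r = Some i).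

Definition big_disj (psi : ranker -> fo2 Sigma) (s : seq (fo2 Sigma * ranker)) : fo2 Sigma :=
  foldr (fun p acc => FOr (FAnd p.1 (psi p.2)) acc) FFalse s.

Definition mutually_exclusive (s : seq (fo2 Sigma)) : Prop :=
  forall i j, i < j < size s ->
    forall w p, in_pos w p ->
      ~ (satx w p (nth FFalse s i) /\ satx w p (nth FFalse s j)).

End Sem.

(* Main.v *)
Require Import Defs.
From mathcomp Require Import all_boot zify.
Set Implicit Arguments. Unset Strict Implicit. Unset Printing Implicit Defensive.

Variant ohead_spec (P : pred nat) s len : option nat -> Prop :=
 | OHSome j of s <= j < s + len & P j & (forall m, s <= m < j -> ~~ P m) :
     ohead_spec P s len (Some j)
 | OHNone of (forall m, s <= m < s + len -> ~~ P m) : ohead_spec P s len None.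

Lemma ohead_filter_iotaP (P : pred nat) s len :
  ohead_spec P s len (ohead [seq x <- iota s len | P x]).
Proof.
elim: len s => [|len IH] s /=.
  by constructor => m; lia.
case Ps: (P s) => /=.
  constructor => //; first lia.
  by move=> m; lia.
case: (IH s.+1) => [j H1 H2 H3|H1]; constructor => //.
- lia.
- move=> m Hm; case: (m =P s) => [->|ne]; first by rewrite Ps.
  apply: H3; lia.
- move=> m Hm; case: (m =P s) => [->|ne]; first by rewrite Ps.
  apply: H1; lia.
Qed.

Variant olast_spec (P : pred nat) s len : option nat -> Prop :=
 | OLSome j of s <= j < s + len & P j & (forall m, j < m < s + len -> ~~ P m) :
     olast_spec P s len (Some j)
 | OLNone of (forall m, s <= m < s + len -> ~~ P m) : olast_spec P s len None.

Lemma olast_filter_iotaP (P : pred nat) s len :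
  olast_spec P s len (ohead (rev [seq x <- iota s len | P x])).
Proof.
elim: len => [|len IH].
  by constructor => m; lia.
rewrite -addn1 iotaD /= filter_cat /= rev_cat /=.
case Ps: (P (s + len)) => /=.
  constructor => //; first lia.
  by move=> m; lia.
rewrite ?cats0.
case: IH => [j H1 H2 H3|H1]; constructor => //.
- lia.
- move=> m Hm; case: (m =P s + len) => [->|ne]; first by rewrite Ps.
  apply: H3; lia.
- move=> m Hm; case: (m =P s + len) => [->|ne]; first by rewrite Ps.
  apply: H1; lia.
Qed.

Section Bpos.
Variable Sigma : eqType.
Implicit Types (w : seq Sigma).

Lemma letter_size w m b : letter_at w m = Some b -> 0 < m -> m <= size w.
Proof.
rewrite /letter_at => H m0.
have : (onth w m.-1 : bool) by rewrite H.
rewrite onthTE; lia.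
Qed.

Lemma letter_in_pos w m b : letter_at w m = Some b -> 0 < m -> in_pos w m.
Proof. move=> H m0; rewrite /in_pos (letter_size H m0); lia. Qed.

Lemma letter_big w m : size w < m -> letter_at w m = None.
Proof. move=> H; rewrite /letter_at onth_default //; lia. Qed.

Variant rel_true_spec w b q : option nat -> Prop :=
 | RTSome j of q < j & letter_at w j = Some b &
     (forall m, q < m < j -> letter_at w m <> Some b) : rel_true_spec w b q (Some j)
 | RTNone of (forall m, q < m -> letter_at w m <> Some b) : rel_true_spec w b q None.

Lemma bpos_rel_trueP w b q : rel_true_spec w b q (bpos_rel w (true, b) q).
Proof.
rewrite /bpos_rel /= /positions_with.
case: ohead_filter_iotaP => [j H1 /eqP H2 H3|H1]; constructor => //.
- lia.
- by move=> m Hm; apply/eqP; apply: H3; lia.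
- move=> m Hm; case: (leqP m (size w)) => Hs.
    by apply/eqP; apply: H1; lia.
  by rewrite letter_big.
Qed.

Variant rel_false_spec w b q : option nat -> Prop :=
 | RFSome j of 0 < j < q & letter_at w j = Some b &
     (forall m, j < m < q -> letter_at w m <> Some b) : rel_false_spec w b q (Some j)
 | RFNone of (forall m, 0 < m < q -> letter_at w m <> Some b) : rel_false_spec w b q None.

Lemma bpos_rel_falseP w b q : rel_false_spec w b q (bpos_rel w (false, b) q).
Proof.
rewrite /bpos_rel /= /positions_with.
case: olast_filter_iotaP => [j H1 /eqP H2 H3|H1]; constructor => //.
- lia.
- by move=> m Hm; apply/eqP; apply: H3; lia.
- by move=> m Hm; apply/eqP; apply: H1; lia.
Qed.

Lemma rel_true_eq w b q j : q < j -> letter_at w j = Some b ->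
  (forall m, q < m < j -> letter_at w m <> Some b) -> bpos_rel w (true, b) q = Some j.
Proof.
move=> H1 H2 H3; case: bpos_rel_trueP => [j0 K1 K2 K3|K]; last by case: (K j).
case: (ltngtP j j0) => [Hl|Hl|->] //.
- by case: (K3 j) => //; lia.
- by case: (H3 j0) => //; lia.
Qed.

Lemma rel_false_eq w b q j : 0 < j < q -> letter_at w j = Some b ->
  (forall m, j < m < q -> letter_at w m <> Some b) -> bpos_rel w (false, b) q = Some j.
Proof.
move=> H1 H2 H3; case: bpos_rel_falseP => [j0 K1 K2 K3|K]; last by case: (K j).
case: (ltngtP j j0) => [Hl|Hl|->] //.
- by case: (H3 j0) => //; lia.
- by case: (K3 j) => //; lia.
Qed.

Definition anch w (d : bool) (r : ranker Sigma) : option nat :=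
  if r is [::] then Some (if d then 0 else (size w).+1) else ranker_eval w r.

Lemma bpos_abs_rel w p : bpos_abs w p = bpos_rel w p (if p.1 then 0 else (size w).+1).
Proof. by case: p => [[] a]; rewrite /bpos_abs /bpos_rel //= subn0. Qed.

Lemma eval_rcons w r p :
  ranker_eval w (rcons r p) = obind (bpos_rel w p) (anch w p.1 r).
Proof.
case: r => [|p1 r] /=; first by rewrite bpos_abs_rel.
by rewrite foldl_rcons; case: foldl.
Qed.

Lemma rel_letter w p q j : bpos_rel w p q = Some j -> letter_at w j = Some p.2 /\ 0 < j.
Proof.
case: p => [[] b] /=.
  by case: bpos_rel_trueP => // j0 H1 H2 _ [<-]; split => //; lia.
by case: bpos_rel_falseP => // j0 H1 H2 _ [<-]; split => //; lia.
Qed.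

Lemma eval_letter w r j p0 : ranker_eval w r = Some j ->
  letter_at w j = Some (last p0 r).2 /\ in_pos w j.
Proof.
case/lastP: r => [|r p] //.
rewrite eval_rcons last_rcons; case: anch => //= q /rel_letter [H1 H2].
by split => //; apply: letter_in_pos H1 H2.
Qed.
End Bpos.

Definition oth (v : var) : var := if v is VX then VY else VX.

Lemma var_eqb_refl v : var_eqb v v. Proof. by case: v. Qed.
Lemma var_eqb_oth v : var_eqb (oth v) v = false. Proof. by case: v. Qed.
Lemma var_eqb_oth' v : var_eqb v (oth v) = false. Proof. by case: v. Qed.
Lemma var_cases v x : x = v \/ x = oth v. Proof. by case: v; case: x; auto. Qed.

Lemma upd_same (nu : var -> nat) v i : upd nu v i v = i.
Proof. by rewrite /upd var_eqb_refl. Qed.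
Lemma upd_oth (nu : var -> nat) v i : upd nu v i (oth v) = nu (oth v).
Proof. by rewrite /upd var_eqb_oth. Qed.

Definition relp (p q p' q' : nat) : bool := ((p < q) == (p' < q')) && ((q < p) == (q' < p')).

Lemma relp_sym p q p' q' : relp p q p' q' = relp q p q' p'.
Proof. by rewrite /relp andbC. Qed.

Lemma relp_lt p q p' q' : relp p q p' q' -> (p < q) = (p' < q').
Proof. by case/andP => /eqP. Qed.

Lemma relp_eq p q p' q' : relp p q p' q' -> (p = q) <-> (p' = q').
Proof.
case/andP => /eqP H1 /eqP H2; split => E.
  by subst; move: H1 H2; rewrite ltnn => /esym/negbT H1 /esym/negbT H2; lia.
by subst; move: H1 H2; rewrite ltnn => /negbT H1 /negbT H2; lia.
Qed.

Lemma relp_refl p p' : relp p p p' p'.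
Proof. by rewrite /relp !ltnn. Qed.

Section Game.
Variable Sigma : eqType.
Variables w w' : seq Sigma.

Fixpoint G (k : nat) (p p' : nat) {struct k} : Prop :=
  [/\ in_pos w p, in_pos w' p' & letter_at w p = letter_at w' p'] /\
  match k with
  | 0 => True
  | k'.+1 =>
    (forall q, in_pos w q -> exists q', [/\ in_pos w' q', relp p q p' q' & G k' q q']) /\
    (forall q', in_pos w' q' -> exists q, [/\ in_pos w q, relp p q p' q' & G k' q q'])
  end.

Lemma G_base k p p' : G k p p' -> [/\ in_pos w p, in_pos w' p' & letter_at w p = letter_at w' p'].
Proof. by case: k => [|k] []. Qed.

Lemma G_mono k p p' : G k.+1 p p' -> G k p p'.
Proof.
elim: k p p' => [|k IH] p p' /= [B [F K]]; first by split.
split => //; split.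
- move=> q /F [q' [H1 H2 H3]]; exists q'; split => //; exact: IH.
- move=> q' /K [q [H1 H2 H3]]; exists q; split => //; exact: IH.
Qed.

Lemma G_le k k' p p' : k' <= k -> G k p p' -> G k' p p'.
Proof.
elim: k => [|k IH]; first by rewrite leqn0 => /eqP ->.
rewrite leq_eqVlt => /orP [/eqP -> //|]; rewrite ltnS => H /G_mono; exact: IH.
Qed.

Lemma sound (f : fo2 Sigma) : forall k (nu nu' : var -> nat),
  qdepth f <= k ->
  (forall v, free v f -> G k (nu v) (nu' v)) ->
  (free VX f -> free VY f -> relp (nu VX) (nu VY) (nu' VX) (nu' VY)) ->
  (exists p p', G k p p') ->
  (sat w nu f <-> sat w' nu' f).
Proof.
elim: f => [||a v|u v|u v|g IH|g IHg h IHh|g IHg h IHh|v g IH] k nu nu' /= Hd Hf Hr Ha.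
- by [].
- by [].
- have [B1 B2 B3] := G_base (Hf v (var_eqb_refl v)).
  by rewrite B3; split => -[_ H]; split.
- move: Hf Hr; case: u; case: v => /= Hf Hr; rewrite ?ltnn //.
  + by rewrite (relp_lt (Hr isT isT)).
  + by rewrite relp_sym in Hr; rewrite (relp_lt (Hr isT isT)).
- move: Hf Hr; case: u; case: v => /= Hf Hr //.
  + exact: relp_eq (Hr isT isT).
  + by rewrite relp_sym in Hr; exact: relp_eq (Hr isT isT).
- have := IH k nu nu' Hd Hf Hr Ha; tauto.
- have E1 : sat w nu g <-> sat w' nu' g.
    apply: IHg Ha; first lia.
    + by move=> v Hv; apply: Hf; rewrite Hv.
    + by move=> H1 H2; apply: Hr; rewrite ?H1 ?H2 ?orbT.
  have E2 : sat w nu h <-> sat w' nu' h.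
    apply: IHh Ha; first lia.
    + by move=> v Hv; apply: Hf; rewrite Hv ?orbT.
    + by move=> H1 H2; apply: Hr; rewrite ?H1 ?H2 ?orbT.
  tauto.
- have E1 : sat w nu g <-> sat w' nu' g.
    apply: IHg Ha; first lia.
    + by move=> v Hv; apply: Hf; rewrite Hv.
    + by move=> H1 H2; apply: Hr; rewrite ?H1 ?H2 ?orbT.
  have E2 : sat w nu h <-> sat w' nu' h.
    apply: IHh Ha; first lia.
    + by move=> v Hv; apply: Hf; rewrite Hv ?orbT.
    + by move=> H1 H2; apply: Hr; rewrite ?H1 ?H2 ?orbT.
  tauto.
- case: k Hd Hf Ha => [|k] // Hd Hf [p [p' Hpp]].
  have Hfu : free (oth v) g -> G k.+1 (nu (oth v)) (nu' (oth v)).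
    by move=> H; apply: Hf; rewrite var_eqb_oth' H.
  have step : forall i i', G k i i' ->
      (free (oth v) g -> relp (nu (oth v)) i (nu' (oth v)) i') ->
      (sat w (upd nu v i) g <-> sat w' (upd nu' v i') g).
    move=> i i' Gi Ri; apply: (IH k); first lia.
    - move=> x Hx; case: (var_cases v x) Hx => -> Hx.
        by rewrite !upd_same.
      rewrite !upd_oth; apply: G_mono; exact: Hfu Hx.
    - move=> H1 H2; have Hu : free (oth v) g by move: H1 H2; case: (oth v).
      move: (Ri Hu); clear; case: v => /=; rewrite /upd /=.
        by rewrite relp_sym.
      by [].
    - by exists i, i'.
  split.
  + move=> [i [Hi Hs]].
    case Hu: (free (oth v) g).
    * have [_ [F _]] := Hfu Hu.
      have [i' [H1 H2 H3]] := F i Hi.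
      by exists i'; split => //; apply/(step i i' H3 (fun _ => H2)).
    * have [_ [F _]] := Hpp.
      have [i' [H1 H2 H3]] := F i Hi.
      have S : sat w (upd nu v i) g <-> sat w' (upd nu' v i') g by apply: step; rewrite // Hu.
      by exists i'; split => //; apply/S.
  + move=> [i' [Hi Hs]].
    case Hu: (free (oth v) g).
    * have [_ [_ K]] := Hfu Hu.
      have [i [H1 H2 H3]] := K i' Hi.
      by exists i; split => //; apply/(step i i' H3 (fun _ => H2)).
    * have [_ [_ K]] := Hpp.
      have [i [H1 H2 H3]] := K i' Hi.
      have S : sat w (upd nu v i) g <-> sat w' (upd nu' v i') g by apply: step; rewrite // Hu.
      by exists i; split => //; apply/S.
Qed.
End Game.

Lemma exists_min (P : pred nat) : (exists i, P i) -> exists m, P m /\ forall n, P n -> m <= n.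
Proof. by move=> H; case: (find_ex_minn H) => m H1 H2; exists m. Qed.

Lemma exists_max (P : pred nat) b : (exists i, P i) -> (forall i, P i -> i <= b) ->
  exists m, P m /\ forall n, P n -> n <= m.
Proof. by move=> H1 H2; case: (ex_maxnP H1 H2) => m K1 K2; exists m. Qed.

Definition ocmp (o : option nat) (p : nat) : nat :=
  if o is Some j then (if j < p then 0 else if j == p then 1 else 2) else 3.

Lemma ocmp_relp j p j' p' : ocmp (Some j) p = ocmp (Some j') p' -> relp p j p' j'.
Proof. by rewrite /ocmp /relp; case: (ltngtP j p); case: (ltngtP j' p'). Qed.

Lemma relp_trans a b c d e f : relp a b c d -> relp c d e f -> relp a b e f.
Proof. by rewrite /relp => /andP [/eqP -> /eqP ->] /andP [/eqP -> /eqP ->]; rewrite !eqxx. Qed.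

Lemma relp_swap p q p' q' : relp p' q' p q -> relp p q p' q'.
Proof. by rewrite /relp => /andP [/eqP -> /eqP ->]; rewrite !eqxx. Qed.

Lemma in_pos_letter (Sigma : eqType) (w : seq Sigma) q : in_pos w q -> exists b, letter_at w q = Some b.
Proof.
rewrite /in_pos /letter_at => /andP [H1 H2].
have : (onth w q.-1 : bool) by rewrite onthTE; lia.
by case: onth => // b _; exists b.
Qed.

Section Strat.
Variable Sigma : finType.
Implicit Types (w : seq Sigma).

Fixpoint rk (L : nat) : seq (ranker Sigma) :=
  if L is L'.+1 then [::] :: [seq p :: r | p <- enum {: bool * Sigma}, r <- rk L']
  else [:: [::]].

Lemma mem_rk L r : (r \in rk L) = (size r <= L).
Proof.
elim: L r => [|L IH] r; first by case: r.
case: r => [|p r] /=; first by rewrite inE eqxx.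
rewrite inE /= ltnS -IH; apply/idP/idP.
  by case/allpairsP => [[x y] [/= _ Hy E]]; case: E => _ ->.
by move=> H; apply/allpairsP; exists (p, r); rewrite mem_enum.
Qed.

Definition Vb w L j := has (fun r => (0 < size r) && (ranker_eval w r == Some j)) (rk L).

Lemma VbP w L j : reflect (exists r, [/\ 0 < size r, size r <= L & ranker_eval w r = Some j])
  (Vb w L j).
Proof.
apply: (iffP hasP) => [[r Hr /andP [H1 /eqP H2]]|[r [H1 H2 H3]]].
  by exists r; split => //; rewrite -mem_rk.
by exists r; rewrite ?mem_rk // H1 H3 eqxx.
Qed.

Definition Pst w w' k p p' : Prop :=
  [/\ in_pos w p, in_pos w' p', letter_at w p = letter_at w' p' &
      forall r : ranker Sigma, 0 < size r -> size r <= k ->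
        ocmp (ranker_eval w r) p = ocmp (ranker_eval w' r) p'].

Definition Glob w w' n : Prop :=
  forall s : ranker Sigma, 0 < size s -> size s <= n -> forall j, ranker_eval w s = Some j ->
    exists j', ranker_eval w' s = Some j' /\
      forall r : ranker Sigma, 0 < size r -> size r <= n ->
        ocmp (ranker_eval w r) j = ocmp (ranker_eval w' r) j'.

Lemma Pst_le w w' k k' p p' : k' <= k -> Pst w w' k p p' -> Pst w w' k' p p'.
Proof. by move=> H [H1 H2 H3 H4]; split => // r R1 R2; apply: H4 => //; lia. Qed.

Lemma Pst_sym w w' k p p' : Pst w w' k p p' -> Pst w' w k p' p.
Proof. by move=> [H1 H2 H3 H4]; split => // r R1 R2; rewrite H4. Qed.

Lemma anch_cons w d p r : anch w d (p :: r) = ranker_eval w (p :: r).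
Proof. by []. Qed.

Lemma forth w w' n k p p' q : Glob w w' n -> 0 < k <= n -> Pst w w' k p p' -> in_pos w q ->
  exists q', [/\ in_pos w' q', relp p q p' q' & Pst w w' k.-1 q q'].
Proof.
move=> Gl Hk HP Hq.
have [Hp Hp' Hlet Hcmp] := HP.
have [b Hb] := in_pos_letter Hq.
have Hq0 : 0 < q by move: Hq; rewrite /in_pos; lia.
case: (q =P p) => [->|Hpq].
  exists p'; split => //; first exact: relp_refl.
  apply: Pst_le HP; lia.
case: (boolP (Vb w k.-1 q)) => [/VbP [r0 [R1 R2 R3]]|HnV].
  have [j' [E1 E2]] := Gl r0 R1 ltac:(lia) q R3.
  have p0 : bool * Sigma := (true, b).
  have [L1 I1] := eval_letter p0 R3.
  have [L2 I2] := eval_letter p0 E1.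
  exists j'; split => //.
    apply: ocmp_relp; rewrite -R3 -E1; apply: Hcmp => //; lia.
  split => //; first by rewrite L1 L2.
  move=> r S1 S2; apply: E2 => //; lia.
have Hnv : forall r, 0 < size r -> size r <= k.-1 -> ranker_eval w r <> Some q.
  by move=> r S1 S2 E; move/VbP: HnV; apply; exists r.
pose Pl := fun j => (j < q) && ((j == 0) || Vb w k.-1 j).
have [l [Pll Hlmax]] : exists l, Pl l /\ forall j, Pl j -> j <= l.
  apply: (@exists_max Pl q); first by exists 0; rewrite /Pl Hq0.
  by move=> i /andP [H _]; lia.
pose Ph := fun j => (q < j) && ((j == (size w).+1) || Vb w k.-1 j).
have [h [Phh Hhmin]] : exists h, Ph h /\ forall j, Ph j -> h <= j.
  apply: exists_min; exists (size w).+1; rewrite /Ph /= eqxx /= andbT.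
  by move: Hq; rewrite /in_pos => /andP [_ H]; rewrite ltnS.
have [Hlq Hl] := andP Pll.
have [Hqh Hh] := andP Phh.
have [R1 [S1 S1' E1 L1]] : exists R1 : ranker Sigma, [/\ 0 < size R1, size R1 <= k,
    ranker_eval w R1 = bpos_rel w (true, b) l & forall p0, (last p0 R1).2 = b].
  case/orP: Hl => [/eqP ->|/VbP [rl [T1 T2 T3]]].
    exists [:: (true, b)]; split => //; first (rewrite /=; lia).
    by rewrite /ranker_eval /= bpos_abs_rel.
  exists (rcons rl (true, b)); rewrite size_rcons; split => //; first lia.
    rewrite eval_rcons; case: rl T1 T2 T3 => //= p1 rl _ _ ->; done.
  by move=> p0; rewrite last_rcons.
have [R2 [S2 S2' E2 L2]] : exists R2 : ranker Sigma, [/\ 0 < size R2, size R2 <= k,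
    ranker_eval w R2 = bpos_rel w (false, b) h & forall p0, (last p0 R2).2 = b].
  case/orP: Hh => [/eqP ->|/VbP [rl [T1 T2 T3]]].
    exists [:: (false, b)]; split => //; first (rewrite /=; lia).
  exists (rcons rl (false, b)); rewrite size_rcons; split => //; first lia.
    rewrite eval_rcons; case: rl T1 T2 T3 => //= p1 rl _ _ ->; done.
  by move=> p0; rewrite last_rcons.
have [j1 [F1 F2 F3]] : exists j1, [/\ bpos_rel w (true, b) l = Some j1, l < j1 & j1 <= q].
  case: bpos_rel_trueP => [j K1 K2 K3|K]; last by case: (K q).
  exists j; split => //; case: (leqP j q) => // Hjq.
  by case: (K3 q) => //; lia.
have [j2 [G1 G2 G3]] : exists j2, [/\ bpos_rel w (false, b) h = Some j2, q <= j2 & j2 < h].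
  case: bpos_rel_falseP => [j K1 K2 K3|K]; last by case: (K q) => //; lia.
  exists j; split => //; first (case: (leqP q j) => // Hjq; by case: (K3 q) => //; lia).
  lia.
have gap : forall r : ranker Sigma, 0 < size r -> size r <= k.-1 -> forall x, l < x < h ->
    ocmp (ranker_eval w r) x = ocmp (ranker_eval w r) q.
  move=> r T1 T2 x Hx; case E: (ranker_eval w r) => [v|] //=.
  have Hvq : v <> q by move=> Hv; apply: (Hnv r T1 T2); rewrite E Hv.
  have Vv : Vb w k.-1 v by apply/VbP; exists r.
  rewrite /ocmp; case: (ltnP v q) => Hvq'.
    have : v <= l by apply: Hlmax; rewrite /Pl /= Hvq' Vv orbT.
    by move=> Hvl; have -> : v < x by lia.
  have Hqv : q < v by lia.
  have : h <= v by apply: Hhmin; rewrite /Ph /= Hqv Vv orbT.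
  move=> Hhv; have -> : (v < x) = false by apply/negbTE; lia.
  have -> : (v == x) = false by apply/eqP; lia.
  by have -> : (v == q) = false by apply/eqP; lia.
have [R [j [/andP [SR SR'] ER LR /andP [Hjl Hjh] Rpq]]] : exists (R : ranker Sigma) j,
    [/\ 0 < size R <= k, ranker_eval w R = Some j, (forall p0, (last p0 R).2 = b),
        l < j < h & relp p q p j].
  have mk : forall j, (p < q) = (p < j) -> (q < p) = (j < p) -> relp p q p j.
    by move=> j0 X1 X2; rewrite /relp X1 X2 !eqxx.
  case: (ltnP p j1) => H1.
    exists R1, j1; split => //; first (by rewrite S1 S1'); first by rewrite E1 F1.
      lia.
    by apply: mk; apply/idP/idP; lia.
  case: (ltnP j2 p) => H2.
    exists R2, j2; split => //; first (by rewrite S2 S2'); first by rewrite E2 G1.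
      lia.
    by apply: mk; apply/idP/idP; lia.
  case: (ltnP p q) => H3.
    exists R2, j2; split => //; first (by rewrite S2 S2'); first by rewrite E2 G1.
      lia.
    by apply: mk; apply/idP/idP; lia.
  exists R1, j1; split => //; first (by rewrite S1 S1'); first by rewrite E1 F1.
    lia.
  by apply: mk; apply/idP/idP; move: Hpq => /eqP; lia.
have [j' [EJ HJ]] := Gl R SR ltac:(lia) j ER.
have p0 : bool * Sigma := (true, b).
have [LJ IJ] := eval_letter p0 EJ.
exists j'; split => //.
  apply: relp_trans Rpq _; apply: ocmp_relp; rewrite -ER -EJ; exact: Hcmp.
split => //; first by rewrite LJ LR Hb.
move=> r T1 T2; rewrite -(gap r T1 T2 j); last lia.
apply: HJ => //; lia.
Qed.

Lemma strat w w' n : Glob w w' n -> Glob w' w n ->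
  forall k, k <= n -> forall p p', Pst w w' k p p' -> G w w' k p p'.
Proof.
move=> G1 G2; elim=> [|k IH] Hk p p' HP.
  by have [H1 H2 H3 _] := HP; split.
have [H1 H2 H3 _] := HP.
have Hk' : 0 < k.+1 <= n by lia.
split; first by split.
split.
- move=> q Hq; have [q' [K1 K2 K3]] := forth G1 Hk' HP Hq.
  by exists q'; split => //; apply: IH => //; lia.
- move=> q' Hq'; have [q [K1 K2 K3]] := forth G2 Hk' (Pst_sym HP) Hq'.
  exists q; split => //; first exact: relp_swap.
  apply: IH; [lia | exact: Pst_sym].
Qed.
End Strat.

Lemma anch_cons2 (S : eqType) (w : seq S) d p r : anch w d (p :: r) = ranker_eval w (p :: r).
Proof. by []. Qed.

Section Ins.
Variable Sigma : eqType.
Variables (w : seq Sigma) (i : nat) (a : Sigma).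
Hypothesis Hi : in_pos w i.
Hypothesis Ha : letter_at w i = Some a.

Definition w' := take i w ++ a :: drop i w.
Definition g j := if j <= i then j else j.+1.

Lemma Hi1 : 0 < i. Proof. by move: Hi; rewrite /in_pos; lia. Qed.
Lemma Hi2 : i <= size w. Proof. by case/andP: Hi. Qed.

Lemma size_w' : size w' = (size w).+1.
Proof. rewrite /w' size_cat /= size_take size_drop; have := Hi2; case: ltnP; lia. Qed.

Lemma letter_g m : 0 < m -> letter_at w' (g m) = letter_at w m.
Proof.
move=> m0; have Hs := Hi2.
have Ht : minn i (size w) = i by apply/minn_idPl.
rewrite /g; case: (leqP m i) => Hm;
  rewrite /letter_at !onthE /w' map_cat nth_cat size_map size_take_min Ht.
- have -> : m.-1 < i by lia.
  by rewrite map_take nth_take //; lia.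
- have -> : (m.+1.-1 < i) = false by apply/negbTE; lia.
  have -> : m.+1.-1 - i = (m.-1 - i).+1 by lia.
  by rewrite /= map_drop nth_drop; congr nth; lia.
Qed.

Lemma letter_new : letter_at w' i.+1 = Some a.
Proof.
have Ht : minn i (size w) = i by apply/minn_idPl; exact: Hi2.
by rewrite /letter_at /w' onth_cat size_take_min Ht /= ltnn subnn.
Qed.

Lemma decomp m : 0 < m -> m = i.+1 \/ exists m0, 0 < m0 /\ m = g m0.
Proof.
move=> m0; case: (ltngtP m i.+1) => H.
- by right; exists m; split => //; rewrite /g; case: leqP => H'; lia.
- right; exists m.-1; split; first lia.
  by rewrite /g; case: leqP => H'; lia.
- by left.
Qed.

Lemma g_lt x y : (g x < g y) = (x < y).
Proof. rewrite /g; case: (leqP x i); case: (leqP y i) => H1 H2; apply/idP/idP; lia. Qed.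

Lemma g_eq x y : (g x = g y) <-> (x = y).
Proof. rewrite /g; case: (leqP x i); case: (leqP y i) => H1 H2; split => E; lia. Qed.

Lemma g_ge x : x <= g x. Proof. rewrite /g; case: (leqP x i); lia. Qed.

Lemma key p q : q <> i -> bpos_rel w p q <> Some i ->
  bpos_rel w' p (g q) = omap g (bpos_rel w p q).
Proof.
case: p => [[] b] Hq Hr.
- case: bpos_rel_trueP Hr => [j K1 K2 K3|K] Hr /=.
  + apply: rel_true_eq; first by rewrite g_lt.
      by rewrite letter_g //; lia.
    move=> m Hm; case: (decomp (m:=m) ltac:(lia)) => [E|[m0 [Hm0 E]]].
      rewrite E letter_new => [[Eab]]; subst b.
      move: Hm; rewrite E /g; case: (leqP q i) => Hqi; case: (leqP j i) => Hji Hm.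
      * lia.
      * by apply: (K3 i) => //; lia.
      * lia.
      * lia.
    rewrite E letter_g //; apply: K3; move: Hm; rewrite E !g_lt //.
  + case: bpos_rel_trueP => // j K1 K2 K3; exfalso.
    case: (decomp (m:=j) ltac:(lia)) => [E|[m0 [Hm0 E]]].
      subst j; move: K2; rewrite letter_new => [[Eab]]; subst b.
      move: K1; rewrite /g; case: (leqP q i) => Hqi K1; last lia.
      by apply: (K i) => //; lia.
    subst j; move: K2; rewrite letter_g //; apply: K.
    by move: K1; rewrite g_lt.
- case: bpos_rel_falseP Hr => [j K1 K2 K3|K] Hr /=.
  + have Hji : j <> i by move=> E; apply: Hr; rewrite E.
    apply: rel_false_eq.
      have := g_ge j; rewrite g_lt; lia.
      by rewrite letter_g //; lia.
    move=> m Hm; case: (decomp (m:=m) ltac:(lia)) => [E|[m0 [Hm0 E]]].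
      rewrite E letter_new => [[Eab]]; subst b.
      move: Hm; rewrite E /g; case: (leqP q i) => Hqi; case: (leqP j i) => Hji' Hm.
      * lia.
      * lia.
      * by apply: (K3 i) => //; lia.
      * lia.
    rewrite E letter_g //; apply: K3; move: Hm; rewrite E !g_lt //.
  + case: bpos_rel_falseP => // j K1 K2 K3; exfalso.
    case: (decomp (m:=j) ltac:(lia)) => [E|[m0 [Hm0 E]]].
      subst j; move: K2; rewrite letter_new => [[Eab]]; subst b.
      move: K1; rewrite /g; case: (leqP q i) => Hqi K1; first lia.
      by apply: (K i) => //; have := Hi1; lia.
    subst j; move: K2; rewrite letter_g //; apply: K.
    by move: K1; rewrite g_lt; have := g_ge m0; lia.
Qed.

Lemma comm n : (forall r : ranker Sigma, 0 < size r -> size r <= n -> ranker_eval w r <> Some i) ->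
  forall r : ranker Sigma, 0 < size r -> size r <= n ->
    ranker_eval w' r = omap g (ranker_eval w r).
Proof.
move=> NV; elim/last_ind => [//|r0 p IH] _; rewrite size_rcons => Hs.
have E := NV (rcons r0 p); rewrite size_rcons in E.
have {}E := E isT Hs; move: E.
rewrite !eval_rcons.
have [A1 A2] : anch w' p.1 r0 = omap g (anch w p.1 r0) /\ anch w p.1 r0 <> Some i.
  case: r0 IH Hs => [|p1 r0] IH Hs.
    have H1 := Hi1; have H2 := Hi2.
    case: p.1; rewrite /anch /g.
      by split => //= [[E]]; lia.
    rewrite size_w'.
    split; first by rewrite /= ifF //; apply/negbTE; lia.
    by case; lia.
  rewrite !anch_cons2 (IH isT); last by move: Hs => /=; lia.
  by split => //; apply: NV => //; move: Hs => /=; lia.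
case: (anch w p.1 r0) A1 A2 => [q|] A1 A2 /=; rewrite A1 //=.
move=> Hr; apply: key => //; by move=> E; apply: A2; rewrite E.
Qed.
End Ins.

Section InsFin.
Variable Sigma : finType.
Variables (w : seq Sigma) (i : nat) (a : Sigma) (n : nat).
Hypothesis Hi : in_pos w i.
Hypothesis Ha : letter_at w i = Some a.
Hypothesis NV : forall r : ranker Sigma, 0 < size r -> size r <= n -> ranker_eval w r <> Some i.

Lemma ocmp_g o j : ocmp (omap (g i) o) (g i j) = ocmp o j.
Proof.
case: o => [v|] //=.
rewrite (g_lt Hi); case: (v < j) => //.
have -> : (g i v == g i j) = (v == j) by apply/eqP/eqP => [/(g_eq Hi)|->].
done.
Qed.

Lemma glob1 : Glob w (w' w i a) n.
Proof.
move=> s S1 S2 j E; exists (g i j); split.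
  by rewrite (comm Hi Ha NV) // E.
by move=> r R1 R2; rewrite (comm Hi Ha NV) // ocmp_g.
Qed.

Lemma glob2 : Glob (w' w i a) w n.
Proof.
move=> s S1 S2 j'; rewrite (comm Hi Ha NV) //.
case E: (ranker_eval w s) => [j|] //= [<-]; exists j; split => //.
by move=> r R1 R2; rewrite (comm Hi Ha NV) // ocmp_g.
Qed.

Lemma pst c : c \in [:: i; i.+1] -> letter_at (w' w i a) c = Some a ->
  Pst w (w' w i a) n i c.
Proof.
move=> Hc Hl; split => //.
- rewrite /in_pos size_w' //; move: Hc; rewrite !inE => /orP [] /eqP ->;
    have := Hi1 Hi; have := Hi2 Hi; lia.
- by rewrite Ha Hl.
move=> r R1 R2; rewrite (comm Hi Ha NV) //.
case E: (ranker_eval w r) => [v|] //=.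
have Hv : v <> i by move=> Ev; apply: (NV R1 R2); rewrite E Ev.
rewrite /g; move: Hc; rewrite !inE => /orP [] /eqP ->; case: (leqP v i) => H.
- have -> : v < i by lia. done.
- have -> : (v < i) = false by apply/negbTE; lia.
  have -> : (v.+1 < i) = false by apply/negbTE; lia.
  have -> : (v == i) = false by apply/eqP; lia.
  by have -> : (v.+1 == i) = false by apply/eqP; lia.
- have -> : v < i by lia. by have -> : v < i.+1 by lia.
- have -> : (v < i) = false by apply/negbTE; lia.
  have -> : (v.+1 < i.+1) = false by apply/negbTE; lia.
  have -> : (v == i) = false by apply/eqP; lia.
  by have -> : (v.+1 == i.+1) = false by apply/eqP; lia.
Qed.
End InsFin.

Section Formulas.
Variable Sigma : eqType.

Definition trip := (fo2 Sigma * fo2 Sigma * fo2 Sigma)%type.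

Definition bstep (p : bpos Sigma) (v : var) (tv tu : trip) : trip :=
  let u := oth v in
  let b := p.2 in
  if p.1 then
   (FAnd (FLetter b v) (FAnd tv.2 (FNot (FEx u (FAnd (@FLt Sigma u v) (FAnd (FLetter b u) tu.2))))),
    FAnd (FEx u (FAnd (@FLt Sigma v u) (FAnd (FLetter b u) tu.2)))
         (FNot (FEx u (FAnd (FOr (@FLt Sigma u v) (@FEq Sigma u v)) (FAnd (FLetter b u) tu.2)))),
    FEx u (FAnd (@FLt Sigma u v) (FAnd (FLetter b u) tu.2)))
  else
   (FAnd (FLetter b v) (FAnd tv.1.2 (FNot (FEx u (FAnd (@FLt Sigma v u) (FAnd (FLetter b u) tu.1.2))))),
    FEx u (FAnd (@FLt Sigma v u) (FAnd (FLetter b u) tu.1.2)),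
    FAnd (FEx u (FAnd (@FLt Sigma u v) (FAnd (FLetter b u) tu.1.2)))
         (FNot (FEx u (FAnd (FOr (@FLt Sigma v u) (@FEq Sigma u v)) (FAnd (FLetter b u) tu.1.2))))).

Fixpoint mk (rr : seq (bpos Sigma)) (v : var) : trip :=
  match rr with
  | [::] => (FFalse, FTrue, FTrue)
  | p :: rr' => bstep p v (mk rr' v) (mk rr' (oth v))
  end.

Lemma upd_ov (nu : var -> nat) v m : upd nu (oth v) m v = nu v.
Proof. by case: v. Qed.

Lemma anch_rcons (w : seq Sigma) d r p : anch w d (rcons r p) = ranker_eval w (rcons r p).
Proof. by case: r. Qed.

Lemma rel_trueS (w : seq Sigma) b q j : bpos_rel w (true, b) q = Some j ->
  [/\ q < j, letter_at w j = Some b & forall m, q < m < j -> letter_at w m <> Some b].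
Proof. by case: bpos_rel_trueP => // j0 H1 H2 H3 [<-]. Qed.
Lemma rel_trueN (w : seq Sigma) b q : bpos_rel w (true, b) q = None ->
  forall m, q < m -> letter_at w m <> Some b.
Proof. by case: bpos_rel_trueP. Qed.
Lemma rel_falseS (w : seq Sigma) b q j : bpos_rel w (false, b) q = Some j ->
  [/\ 0 < j < q, letter_at w j = Some b & forall m, j < m < q -> letter_at w m <> Some b].
Proof. by case: bpos_rel_falseP => // j0 H1 H2 H3 [<-]. Qed.
Lemma rel_falseN (w : seq Sigma) b q : bpos_rel w (false, b) q = None ->
  forall m, 0 < m < q -> letter_at w m <> Some b.
Proof. by case: bpos_rel_falseP. Qed.

Lemma mk_sem (w : seq Sigma) rr : forall v (nu : var -> nat), in_pos w (nu v) ->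
  [/\ sat w nu (mk rr v).1.1 <-> ranker_eval w (rev rr) = Some (nu v),
      sat w nu (mk rr v).1.2 <-> (exists c, anch w false (rev rr) = Some c /\ nu v < c)
    & sat w nu (mk rr v).2 <-> (exists c, anch w true (rev rr) = Some c /\ c < nu v)].
Proof.
elim: rr => [|p rr IH] v nu Hv.
  move: Hv; rewrite /in_pos => /andP [H1 H2]; split => //=.
  - by split => // _; exists (size w).+1; split => //; lia.
  - by split => // _; exists 0; split => //; lia.
have [Ev Lv Gv] := IH v nu Hv.
have IHu : forall m, in_pos w m ->
  [/\ sat w (upd nu (oth v) m) (mk rr (oth v)).1.1 <-> ranker_eval w (rev rr) = Some m,
      sat w (upd nu (oth v) m) (mk rr (oth v)).1.2 <->
        (exists c, anch w false (rev rr) = Some c /\ m < c)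
    & sat w (upd nu (oth v) m) (mk rr (oth v)).2 <->
        (exists c, anch w true (rev rr) = Some c /\ c < m)].
  by move=> m Hm; have := IH (oth v) (upd nu (oth v) m); rewrite upd_same; apply.
rewrite rev_cons !anch_rcons eval_rcons.
case: p => [[] b] /=.
-
  have Gu : forall m, in_pos w m -> sat w (upd nu (oth v) m) (mk rr (oth v)).2 <->
        (exists c, anch w true (rev rr) = Some c /\ c < m).
    by move=> m Hm; have [_ _ ->] := IHu m Hm.
  case EA: (anch w true (rev rr)) => [c|] /=; last first.
    split.
    + by split => [[_ [/Gv [c' [E _]] _]]|//]; rewrite EA in E.
    + by split => [[[m [Hm [_ [_ /(Gu m Hm) [c' [E _]]]]]] _]|[c' []]] //; rewrite EA in E.
    + by split => [[m [Hm [_ [_ /(Gu m Hm) [c' [E _]]]]]]|[c' []]] //; rewrite EA in E.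
  have Gu' : forall m, in_pos w m -> sat w (upd nu (oth v) m) (mk rr (oth v)).2 <-> c < m.
    move=> m Hm; rewrite Gu // EA; split => [[c' [[<-] H]]|H] //; by exists c.
  have Gv' : sat w nu (mk rr v).2 <-> c < nu v.
    rewrite Gv EA; split => [[c' [[<-] H]]|H] //; by exists c.
  split.
  + split.
    * move=> [[_ Hb] [/Gv' Hc Hn]].
      apply: rel_true_eq => // m Hm Hmb; apply: Hn.
      have Hm' : in_pos w m by apply: letter_in_pos Hmb _; lia.
      exists m; split => //; rewrite upd_same upd_ov; split; first lia.
      split; first by split. by apply/Gu' => //; lia.
    * move/rel_trueS => [K1 K2 K3]; split; first by split.
      split; first by apply/Gv'.
      move=> [m [Hm]]; rewrite upd_same upd_ov => [[Hmv [[_ Hmb] /(Gu' m Hm) Hcm]]].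
      by apply: (K3 m) => //; lia.
  + split.
    * move=> [[m [Hm]]]; rewrite upd_same upd_ov => [[Hvm [[_ Hmb] /(Gu' m Hm) Hcm]]] Hn.
      case E: (bpos_rel w (true, b) c) => [j|]; last by case: (rel_trueN E Hcm).
      have [K1 K2 K3] := rel_trueS E.
      exists j; split => //; case: (leqP j (nu v)) => // Hjv; exfalso; apply: Hn.
      have Hj : in_pos w j by apply: letter_in_pos K2 _; lia.
      exists j; split => //; rewrite upd_same upd_ov; split.
        by case: (ltngtP j (nu v)) Hjv => //; auto.
      split; first by split. by apply/Gu' => //; lia.
    * move=> [j [E Hvj]]; have [K1 K2 K3] := rel_trueS E.
      have Hj : in_pos w j by apply: letter_in_pos K2 _; lia.
      split.
        exists j; split => //; rewrite upd_same upd_ov; split => //.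
        split; first by split. by apply/Gu' => //; lia.
      move=> [m [Hm]]; rewrite upd_same upd_ov => [[Hmv [[_ Hmb] /(Gu' m Hm) Hcm]]].
      by apply: (K3 m) => //; case: Hmv; lia.
  + split.
    * move=> [m [Hm]]; rewrite upd_same upd_ov => [[Hmv [[_ Hmb] /(Gu' m Hm) Hcm]]].
      case E: (bpos_rel w (true, b) c) => [j|]; last by case: (rel_trueN E Hcm).
      have [K1 K2 K3] := rel_trueS E.
      exists j; split => //; case: (leqP m j) => Hjm; last lia.
      case: (ltngtP j m) Hjm => // Hjm _; first by case: (K3 m) => //; lia.
      by rewrite Hjm.
    * move=> [j [E Hjv]]; have [K1 K2 K3] := rel_trueS E.
      have Hj : in_pos w j by apply: letter_in_pos K2 _; lia.
      exists j; split => //; rewrite upd_same upd_ov; split => //.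
      split; first by split. by apply/Gu' => //; lia.
-
  have Lu : forall m, in_pos w m -> sat w (upd nu (oth v) m) (mk rr (oth v)).1.2 <->
        (exists c, anch w false (rev rr) = Some c /\ m < c).
    by move=> m Hm; have [_ -> _] := IHu m Hm.
  case EA: (anch w false (rev rr)) => [c|] /=; last first.
    split.
    + by split => [[_ [/Lv [c' [E _]] _]]|//]; rewrite EA in E.
    + by split => [[m [Hm [_ [_ /(Lu m Hm) [c' [E _]]]]]]|[c' []]] //; rewrite EA in E.
    + by split => [[[m [Hm [_ [_ /(Lu m Hm) [c' [E _]]]]]] _]|[c' []]] //; rewrite EA in E.
  have Lu' : forall m, in_pos w m -> sat w (upd nu (oth v) m) (mk rr (oth v)).1.2 <-> m < c.
    move=> m Hm; rewrite Lu // EA; split => [[c' [[<-] H]]|H] //; by exists c.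
  have Lv' : sat w nu (mk rr v).1.2 <-> nu v < c.
    rewrite Lv EA; split => [[c' [[<-] H]]|H] //; by exists c.
  have Hv0 : 0 < nu v by move: Hv; rewrite /in_pos; lia.
  split.
  + split.
    * move=> [[_ Hb] [/Lv' Hc Hn]].
      apply: rel_false_eq => //; first lia.
      move=> m Hm Hmb; apply: Hn.
      have Hm' : in_pos w m by apply: letter_in_pos Hmb _; lia.
      exists m; split => //; rewrite upd_same upd_ov; split; first lia.
      split; first by split. by apply/Lu' => //; lia.
    * move/rel_falseS => [K1 K2 K3]; split; first by split.
      split; first by apply/Lv'; lia.
      move=> [m [Hm]]; rewrite upd_same upd_ov => [[Hmv [[_ Hmb] /(Lu' m Hm) Hcm]]].
      by apply: (K3 m) => //; lia.
  + split.
    * move=> [m [Hm]]; rewrite upd_same upd_ov => [[Hvm [[_ Hmb] /(Lu' m Hm) Hcm]]].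
      have Hm0 : 0 < m by move: Hm; rewrite /in_pos; lia.
      case E: (bpos_rel w (false, b) c) => [j|]; last by case: (rel_falseN E (m:=m) ltac:(lia)).
      have [K1 K2 K3] := rel_falseS E.
      exists j; split => //; case: (leqP m j) => Hjm; first lia.
      by case: (K3 m) => //; lia.
    * move=> [j [E Hvj]]; have [K1 K2 K3] := rel_falseS E.
      have Hj : in_pos w j by apply: letter_in_pos K2 _; lia.
      exists j; split => //; rewrite upd_same upd_ov; split => //.
      split; first by split. by apply/Lu' => //; lia.
  + split.
    * move=> [[m [Hm]]]; rewrite upd_same upd_ov => [[Hmv [[_ Hmb] /(Lu' m Hm) Hcm]]] Hn.
      have Hm0 : 0 < m by move: Hm; rewrite /in_pos; lia.
      case E: (bpos_rel w (false, b) c) => [j|]; last by case: (rel_falseN E (m:=m) ltac:(lia)).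
      have [K1 K2 K3] := rel_falseS E.
      exists j; split => //; case: (ltnP j (nu v)) => // Hjv; exfalso; apply: Hn.
      have Hj : in_pos w j by apply: letter_in_pos K2 _; lia.
      exists j; split => //; rewrite upd_same upd_ov; split.
        by case: (ltngtP (nu v) j) Hjv => //; auto.
      split; first by split. by apply/Lu' => //; lia.
    * move=> [j [E Hjv]]; have [K1 K2 K3] := rel_falseS E.
      have Hj : in_pos w j by apply: letter_in_pos K2 _; lia.
      split.
        exists j; split => //; rewrite upd_same upd_ov; split => //.
        split; first by split. by apply/Lu' => //; lia.
      move=> [m [Hm]]; rewrite upd_same upd_ov => [[Hmv [[_ Hmb] /(Lu' m Hm) Hcm]]].
      by apply: (K3 m) => //; case: Hmv; lia.
Qed.
End Formulas.

Lemma mk_depth (Sigma : eqType) (rr : seq (bpos Sigma)) v :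
  [/\ qdepth (mk rr v).1.1 <= size rr, qdepth (mk rr v).1.2 <= size rr
    & qdepth (mk rr v).2 <= size rr].
Proof.
elim: rr v => [|p rr IH] v //=.
have [A1 A2 A3] := IH v; have [B1 B2 B3] := IH (oth v).
by case: p => [[] b] /=; split; lia.
Qed.

Lemma mk_free (Sigma : eqType) (rr : seq (bpos Sigma)) v :
  [/\ free (oth v) (mk rr v).1.1 = false, free (oth v) (mk rr v).1.2 = false
    & free (oth v) (mk rr v).2 = false].
Proof.
elim: rr v => [|p rr IH] v //=.
have [A1 A2 A3] := IH v.
by case: p => [[] b] /=; rewrite ?var_eqb_refl ?var_eqb_oth' ?A1 ?A2 ?A3.
Qed.

Section Main.
Variable Sigma : finType.

Definition psiR (r : ranker Sigma) : fo2 Sigma := (mk (rev r) VX).1.1.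

Lemma psiR_sem (w : seq Sigma) i r : in_pos w i ->
  (satx w i (psiR r) <-> ranker_eval w r = Some i).
Proof.
move=> Hi; have [E _ _] := @mk_sem Sigma w (rev r) VX (fun v => if v is VX then i else 0) Hi.
by rewrite revK in E.
Qed.

Lemma psiR_def n r : in_Rstar n r -> defines_ranker n (psiR r) r.
Proof.
move=> /andP [H1 H2]; split; [|split].
- have [D _ _] := mk_depth (rev r) VX; rewrite /in_FO2n /psiR; move: D; rewrite size_rev; lia.
- by have [F _ _] := mk_free (rev r) VX; rewrite /only_x /psiR; move: F => /= ->.
- by move=> w i Hi; apply: psiR_sem.
Qed.

Lemma core n (phi : fo2 Sigma) (w : seq Sigma) i :
  in_FO2n n phi -> unique_position phi -> in_pos w i -> satx w i phi ->
  exists r, in_Rstar n r /\ ranker_eval w r = Some i.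
Proof.
move=> Hd [Hx Hu] Hi Hs.
case: (boolP (Vb w n i)) => [/VbP [r [R1 R2 R3]]|HnV].
  by exists r; rewrite /in_Rstar R1 R2.
have NV : forall r : ranker Sigma, 0 < size r -> size r <= n -> ranker_eval w r <> Some i.
  by move=> r R1 R2 E; move/VbP: HnV; apply; exists r.
have [a Ha] := in_pos_letter Hi.
set w2 := w' w i a.
have Gl1 := glob1 Hi Ha NV; have Gl2 := glob2 Hi Ha NV.
have gi : g i i = i by rewrite /g leqnn.
have L1 : letter_at w2 i = Some a by rewrite -{1}gi letter_g //; exact: Hi1 Hi.
have L2 : letter_at w2 i.+1 = Some a by exact: letter_new.
have trans : forall c, c \in [:: i; i.+1] -> letter_at w2 c = Some a ->
    in_pos w2 c /\ satx w2 c phi.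
  move=> c Hc Hl; have P := pst Hi Ha NV Hc Hl.
  have GG := strat Gl1 Gl2 (leqnn n) P.
  have [_ Hc2 _] := G_base GG.
  split => //.
  have := @sound Sigma w w2 phi n (fun v => if v is VX then i else 0)
    (fun v => if v is VX then c else 0) Hd.
  move=> S; apply/S => //.
  - by case => //=; move: Hx; rewrite /only_x => /negbTE ->.
  - by move: Hx; rewrite /only_x => /negbTE ->.
  - by exists i, c.
have [P1 S1] := trans i (mem_head _ _) L1.
have [P2 S2] := trans i.+1 ltac:(by rewrite !inE eqxx orbT) L2.
have := Hu w2 i i.+1 P1 P2 S1 S2; lia.
Qed.

Lemma sat_foldr (w : seq Sigma) nu (fs : seq (fo2 Sigma)) :
  sat w nu (foldr (@FAnd Sigma) FTrue fs) <-> (forall j, j < size fs -> sat w nu (nth FTrue fs j)).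
Proof.
elim: fs => [|f fs IH] /=; first by split.
rewrite IH; split => [[H1 H2] [|j] //=|H]; first by move=> Hj; apply: H2.
by split; [apply: (H 0)|move=> j Hj; apply: (H j.+1)].
Qed.

Lemma depth_foldr n (fs : seq (fo2 Sigma)) :
  all (fun f => qdepth f <= n) fs -> qdepth (foldr (@FAnd Sigma) FTrue fs) <= n.
Proof. elim: fs => [|f fs IH] //= /andP [H1 H2]; have := IH H2; lia. Qed.

Lemma free_foldr v (fs : seq (fo2 Sigma)) :
  free v (foldr (@FAnd Sigma) FTrue fs) = has (free v) fs.
Proof. by elim: fs => [|f fs IH] //=; rewrite IH. Qed.

Lemma sat_big_disj (w : seq Sigma) nu psi (s : seq (fo2 Sigma * ranker Sigma)) :
  sat w nu (big_disj psi s) <->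
  (exists j, j < size s /\ sat w nu (nth (FFalse, [::]) s j).1 /\
                           sat w nu (psi (nth (FFalse, [::]) s j).2)).
Proof.
elim: s => [|x s IH] /=; first by split => // [[j []]].
rewrite IH; split.
- case=> [[H1 H2]|[j [H1 H2]]]; first by exists 0.
  by exists j.+1.
- case=> [[|j] [H1 H2]]; [by left|right; by exists j].
Qed.

End Main.
Unset Implicit Arguments.

Theorem theorem3p12 (Sigma : finType) (n : nat) (phi : fo2 Sigma) :
  0 < n ->
  in_FO2n n phi ->
  unique_position phi ->
  (forall r : ranker Sigma, in_Rstar n r -> exists psi, defines_ranker n psi r) /\
  exists s : seq (fo2 Sigma * ranker Sigma),
    mutually_exclusive (map fst s) /\
    all (fun p => in_FO2n n p.1 && only_x p.1) s /\
    all (fun p => in_Rstar n p.2) s /\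
    forall psi : ranker Sigma -> fo2 Sigma,
      (forall r, r \in map snd s -> defines_ranker n (psi r) r) ->
      fo2_equiv phi (big_disj psi s).
Proof.
move=> Hn Hd Hu.
split; first by move=> r Hr; exists (psiR r); exact: psiR_def.
set rs := [seq r <- rk Sigma n | in_Rstar n r].
have Hrs : forall j, j < size rs -> in_Rstar n (nth [::] rs j).
  by move=> j Hj; have := mem_nth [::] Hj; rewrite mem_filter => /andP [].
pose alpha j := FAnd phi (FAnd (psiR (nth [::] rs j))
                  (foldr (@FAnd Sigma) FTrue [seq FNot (psiR (nth [::] rs l)) | l <- iota 0 j])).
exists [seq (alpha j, nth [::] rs j) | j <- iota 0 (size rs)].
have Efst : map fst [seq (alpha j, nth [::] rs j) | j <- iota 0 (size rs)] =
            [seq alpha j | j <- iota 0 (size rs)] by rewrite -map_comp.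
have Esnd : map snd [seq (alpha j, nth [::] rs j) | j <- iota 0 (size rs)] = rs.
  by rewrite -map_comp; exact: mkseq_nth.
have Ealpha : forall w i j, in_pos w i -> j < size rs ->
   (satx w i (alpha j) <-> [/\ satx w i phi, ranker_eval w (nth [::] rs j) = Some i &
       forall l, l < j -> ranker_eval w (nth [::] rs l) <> Some i]).
  move=> w i j Hi Hj; rewrite /alpha /satx /= sat_foldr size_map size_iota.
  have P := psiR_sem (nth [::] rs j) Hi; rewrite /satx in P; rewrite P.
  split => [[H1 [H2 H3]]|[H1 H2 H3]]; split => //.
    move=> l Hl; have := H3 l Hl; rewrite (nth_map 0) ?size_iota // nth_iota // add0n /=.
    by move=> Hn' E; apply: Hn'; have := psiR_sem (nth [::] rs l) Hi; rewrite /satx => ->.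
  split => // l Hl; rewrite (nth_map 0) ?size_iota // nth_iota // add0n /=.
  by have := psiR_sem (nth [::] rs l) Hi; rewrite /satx => ->; apply: H3.
split; [|split; [|split]].
- rewrite Efst => j l /andP [Hjl Hl] w p Hp; rewrite size_map size_iota in Hl.
  rewrite !(nth_map 0) ?size_iota //; try lia.
  rewrite !nth_iota ?add0n //; try lia.
  have Hj' : j < size rs by lia.
  case=> /(Ealpha w p j Hp Hj') [_ E _] /(Ealpha w p l Hp Hl) [_ _ K].
  exact: K Hjl E.
- rewrite all_map; apply/allP => j; rewrite mem_iota => /andP [_ Hj] /=.
  have := Hrs j ltac:(lia) => /andP [R1 R2].
  have [D _ _] := mk_depth (rev (nth [::] rs j)) VX.
  have [F _ _] := mk_free (rev (nth [::] rs j)) VX.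
  apply/andP; split.
    rewrite /in_FO2n /=; have := Hd; rewrite /in_FO2n => Hd'.
    have Hf : qdepth (foldr (@FAnd Sigma) FTrue
                 [seq FNot (psiR (nth [::] rs l)) | l <- iota 0 j]) <= n.
      apply: depth_foldr; rewrite all_map; apply/allP => l _ /=.
      have [D' _ _] := mk_depth (rev (nth [::] rs l)) VX.
      move: D'; rewrite size_rev /psiR.
      have : size (nth [::] rs l) <= n.
        case: (ltnP l (size rs)) => Hl; first by case/andP: (Hrs l Hl).
        by rewrite nth_default.
      by move=> A B; exact: leq_trans B A.
    move: D Hf; rewrite size_rev /psiR => D Hf.
    by rewrite /= !geq_max Hd' Hf andbT /=; exact: leq_trans D R2.
  rewrite /only_x /= negb_or free_foldr.
  have := Hu => [[Hx _]]; move: Hx; rewrite /only_x => /negbTE -> /=.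
  rewrite /psiR; move: F => /= ->; rewrite /=.
  rewrite has_map; apply/hasPn => l _ /=.
  by have [F' _ _] := mk_free (rev (nth [::] rs l)) VX; move: F' => /= ->.
- rewrite all_map; apply/allP => j; rewrite mem_iota => /andP [_ Hj] /=.
  apply: Hrs; lia.
- move=> psi Hpsi w i Hi.
  rewrite /satx sat_big_disj size_map size_iota.
  split.
  + move=> Hs; have [r [Hr Er]] := core Hd Hu Hi Hs.
    have rin : r \in rs.
      by rewrite mem_filter Hr mem_rk; case/andP: Hr.
    pose P := fun r0 => ranker_eval w r0 == Some i.
    have Hh : has P rs by apply/hasP; exists r => //; rewrite /P Er.
    set j := find P rs.
    have Hj : j < size rs by rewrite -has_find.
    exists j; split => //.
    rewrite (nth_map 0) ?size_iota // nth_iota // add0n /=.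
    have Ej : ranker_eval w (nth [::] rs j) = Some i by apply/eqP; exact: (nth_find [::] Hh).
    split.
      apply/(Ealpha w i j Hi Hj); split => // l Hl E.
      by have := before_find [::] Hl; rewrite /P E eqxx.
    have Dj : defines_ranker n (psi (nth [::] rs j)) (nth [::] rs j).
      by apply: Hpsi; rewrite Esnd mem_nth.
    have [_ [_ S]] := Dj; by apply/(S w i Hi).
  + move=> [j [Hj [H1 _]]].
    move: H1; rewrite (nth_map 0) ?size_iota // nth_iota // add0n /=.
    by case.
Qed.
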